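(* Let $\mathcal{L}$ be an intuitionistic abstract logic and $a,b\in Expr_{\mathcal{L}}$. For every theory $T\in Th_{\mathcal{L}}$: (a) $a,b\in T$ iff $a\wedge b\in T$; (b) if $a\in T$ or $b\in T$ then $a\vee b\in T$, and the converse holds when $T$ is prime; (c) if $a\in T$ and $a\to b\in T$ then $b\in T$; (d) if $P\in PTh_{\mathcal{L}}$ is a prime theory, then $a\to b\in P$ iff for every prime theory $Q\supseteq P$, $a\in Q$ implies $b\in Q$.
   Context: An abstract logic is a triple $\mathcal{L}=(Expr_{\mathcal{L}},Th_{\mathcal{L}},\mathcal{C}_{\mathcal{L}})$ where $Expr_{\mathcal{L}}$ is a set, $Th_{\mathcal{L}}$ a non-empty set of subsets of $Expr_{\mathcal{L}}$ (theories) with $\bigcap\mathcal{T}\in Th_{\mathcal{L}}$ for every non-empty $\mathcal{T}\subseteq Th_{\mathcal{L}}$, and $\mathcal{C}_{\mathcal{L}}$ a set of operations on $Expr_{\mathcal{L}}$. $\mathcal{L}$ is closed under union of chains if the union of every non-empty chain of theories is a theory. A theory $T$ is prime if $T=\bigcap\mathcal{T}$ for a non-empty finite $\mathcal{T}\subseteq Th_{\mathcal{L}}$ implies $T\in\mathcal{T}$; totally prime if this holds for every non-empty $\mathcal{T}$ of any cardinality. $PTh_{\mathcal{L}}$, $TPTh_{\mathcal{L}}$ denote the sets of prime and totally prime theories. An intuitionistic abstract logic is an abstract logic closed under union of chains with binary connectives $\vee,\wedge,\to$ and constants $\top,\bot$ such that for all $a,b\in Expr_{\mathcal{L}}$ and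 all $T\in TPTh_{\mathcal{L}}$: $a\vee b\in T$ iff $a\in T$ or $b\in T$; $a\wedge b\in T$ iff $a\in T$ and $b\in T$; $a\to b\in T$ iff for every totally prime $T'\supseteq T$, $a\in T'$ implies $b\in T'$; $\top$ lies in every theory and $\bot$ in no theory. *)

(* Defs.v *)
(* Sets of expressions are predicates [Expr -> Prop];
   equality of theories is Leibniz equality of predicates (with functional and
   propositional extensionality, which are whitelisted, this is set equality). *)
From Stdlib Require Import List.
Set Implicit Arguments.

Definition bigcap {E : Type} (F : (E -> Prop) -> Prop) : E -> Prop :=
  fun x => forall T, F T -> T x.

Definition bigcup {E : Type} (F : (E -> Prop) -> Prop) : E -> Prop :=
  fun x => exists T, F T /\ T x.

Definition subset {E : Type} (A B : E -> Prop) : Prop := forall x, A x -> B x.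

(* Abstract logic (Expr, Th, C); the operations C are recorded in
   [intuitionistic_logic] below as the specific connectives needed. *)
Record abstract_logic := {
  Expr : Type;
  Th : (Expr -> Prop) -> Prop;
  Th_nonempty : exists T, Th T;
  Th_inter : forall F : (Expr -> Prop) -> Prop,
      (exists T, F T) -> (forall T, F T -> Th T) -> Th (bigcap F)
}.

Definition is_chain {E : Type} (F : (E -> Prop) -> Prop) : Prop :=
  forall T1 T2, F T1 -> F T2 -> subset T1 T2 \/ subset T2 T1.

Definition closed_under_union_of_chains (L : abstract_logic) : Prop :=
  forall F : (Expr L -> Prop) -> Prop,
    (exists T, F T) -> (forall T, F T -> Th L T) -> is_chain F -> Th L (bigcup F).

(* Prime theory: T = ⋂ 𝒯 for a non-empty finite 𝒯 ⊆ Th implies T ∈ 𝒯.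
   Finite families are given by a (non-empty) list enumerating them. *)
Definition prime_theory (L : abstract_logic) (T : Expr L -> Prop) : Prop :=
  Th L T /\
  forall l : list (Expr L -> Prop),
    l <> nil -> (forall T', In T' l -> Th L T') ->
    T = bigcap (fun T' => In T' l) -> In T l.

Definition totally_prime_theory (L : abstract_logic) (T : Expr L -> Prop) : Prop :=
  Th L T /\
  forall F : (Expr L -> Prop) -> Prop,
    (exists T', F T') -> (forall T', F T' -> Th L T') ->
    T = bigcap F -> F T.

Record intuitionistic_logic := {
  IL :> abstract_logic;
  IL_chains : closed_under_union_of_chains IL;
  lor : Expr IL -> Expr IL -> Expr IL;
  land : Expr IL -> Expr IL -> Expr IL;
  limp : Expr IL -> Expr IL -> Expr IL;
  ltop : Expr IL;
  lbot : Expr IL;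
  lor_spec : forall a b T, totally_prime_theory IL T ->
      (T (lor a b) <-> T a \/ T b);
  land_spec : forall a b T, totally_prime_theory IL T ->
      (T (land a b) <-> T a /\ T b);
  limp_spec : forall a b T, totally_prime_theory IL T ->
      (T (limp a b) <-> forall T', totally_prime_theory IL T' -> subset T T' ->
                                   T' a -> T' b);
  ltop_spec : forall T, Th IL T -> T ltop;
  lbot_spec : forall T, Th IL T -> ~ T lbot
}.

(* Main.v *)
Require Import Defs.
From Stdlib Require Import List Classical FunctionalExtensionality PropExtensionality.
From mathcomp Require classical_sets.

Lemma sep (L : intuitionistic_logic) (T : Expr L -> Prop) (x : Expr L) :
  Th L T -> ~ T x ->
  exists M, totally_prime_theory L M /\ Defs.subset T M /\ ~ M x.
Proof.
 intros HT Hx.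
 set (P := fun U : Expr L -> Prop => (forall y, ~ U y) \/ (Th L U /\ Defs.subset T U /\ ~ U x)).
 destruct (@classical_sets.Zorn_bigcup (Expr L) P) as [M [HM Hmax]].
 - intros F HF Htot.
   destruct (classic (exists U, F U /\ exists y, U y)) as [[U [FU [y Uy]]]|Hno].
   + right. set (G := fun V => F V /\ exists y, V y).
     assert (E : classical_sets.bigcup F (fun X => X) = Defs.bigcup G).
     { apply functional_extensionality; intro z; apply propositional_extensionality; split.
       - intros [V FV Vz]. exists V. split; [split; [exact FV| exists z; exact Vz]|exact Vz].
       - intros [V [[FV _] Vz]]. exists V; assumption. }
     rewrite E.
     assert (HG: forall V, G V -> Th L V /\ Defs.subset T V /\ ~ V x).
     { intros V [FV [z Vz]]. destruct (HF V FV) as [H0|H0]; [exfalso; exact (H0 z Vz)|exact H0]. }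
     split; [|split].
     * apply IL_chains.
       -- exists U; split; auto; exists y; auto.
       -- intros V GV; apply HG; auto.
       -- intros V1 V2 [F1 _] [F2 _]. destruct (Htot V1 V2 F1 F2); auto.
     * intros z Tz. exists U. split.
       -- split; auto; exists y; auto.
       -- apply (HG U). split; auto; exists y; auto. exact Tz.
     * intros [V [GV Vx]]. apply (HG V GV). exact Vx.
   + left. intros y [V FV Vy]. apply Hno. exists V. split; auto; exists y; auto.
 - exists M. destruct HM as [HM|[ThM [TM Mx]]].
   + exfalso. apply (Hmax T).
     * split.
       -- intros z Mz; destruct (HM z Mz).
       -- intro H. apply (HM (ltop L)). apply H. apply ltop_spec; auto.
     * right. split; auto. split; [intros z Hz; auto|auto].
   + split; [split|split; auto].
     * exact ThM.
     * intros F [U FU] HF E. apply NNPP; intro nFM. apply Mx.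
       assert (MV : forall V, F V -> Defs.subset M V).
       { intros V FV z Hz. rewrite E in Hz. apply Hz; auto. }
       rewrite E. intros V FV.
       apply NNPP; intro nVx.
       destruct (classic (Defs.subset V M)) as [VM|VM].
       -- apply nFM. replace M with V; auto. apply functional_extensionality; intro z;
          apply propositional_extensionality; split; [apply VM | apply (MV V FV)].
       -- apply (Hmax V).
          ++ split; [exact (MV V FV)|exact VM].
          ++ right. split; [auto|split; auto]. intros z Tz. apply (MV V FV), TM, Tz.
Qed.

Lemma tp_p (L : intuitionistic_logic) T : totally_prime_theory L T -> prime_theory L T.
Proof.
 intros [H1 H2]; split; auto; intros l Hl Hth E. apply H2; auto.
 destruct l as [|e l]; [congruence| exists e; left; auto].
Qed.

Lemma mp (L : intuitionistic_logic) (a b : Expr L) T : Th L T ->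
  T a -> T (limp L a b) -> T b.
Proof.
 intros HT Ha Hi. apply NNPP; intro N. destruct (@sep L _ _ HT N) as [M [HM [TM NM]]].
 apply NM. apply (proj1 (limp_spec L a b HM) (TM _ Hi) M HM (fun z h => h) (TM _ Ha)).
Qed.

Theorem lemma2p7 (L : intuitionistic_logic) (a b : Expr L) :
  (forall T : Expr L -> Prop, Th L T ->
     ((T a /\ T b) <-> T (land L a b)) /\
     ((T a \/ T b -> T (lor L a b)) /\
      (prime_theory L T -> T (lor L a b) -> T a \/ T b)) /\
     (T a -> T (limp L a b) -> T b)) /\
  (forall P : Expr L -> Prop, prime_theory L P ->
     (P (limp L a b) <->
      forall Q : Expr L -> Prop, prime_theory L Q -> subset P Q -> Q a -> Q b)).
Proof.
split.
- intros T HT. split; [|split; [split|]].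
  + split.
    * intros [Ha Hb]. apply NNPP; intro N. destruct (@sep L _ _ HT N) as [M [HM [TM NM]]].
      apply NM. apply (land_spec L a b HM). split; auto.
    * intros H. split; apply NNPP; intro N; destruct (@sep L _ _ HT N) as [M [HM [TM NM]]];
        apply NM; apply (land_spec L a b HM); apply TM; auto.
  + intros H. apply NNPP; intro N; destruct (@sep L _ _ HT N) as [M [HM [TM NM]]].
    apply NM; apply (lor_spec L a b HM); destruct H; [left|right]; apply TM; auto.
  + intros HP Hor. apply NNPP; intro N. apply not_or_and in N as [Na Nb].
    set (G := fun U => totally_prime_theory L U /\ Defs.subset T U).
    assert (Tfull: forall z, (forall U, G U -> U z) -> T z).
    { intros z Hz. apply NNPP; intro N. destruct (@sep L _ _ HT N) as [M [HM [TM NM]]].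
      apply NM, Hz. split; auto. }
    assert (Gab : forall U, G U -> U a \/ U b).
    { intros U [HU TU]. apply (lor_spec L a b HU). apply TU; auto. }
    set (Ga := fun U => G U /\ U a). set (Gb := fun U => G U /\ U b).
    destruct (classic (exists U, Ga U)) as [[Ua HUa]|NA].
    2:{ apply Nb, Tfull. intros U GU. destruct (Gab U GU); auto. exfalso; apply NA; exists U; split; auto. }
    destruct (classic (exists U, Gb U)) as [[Ub HUb]|NB].
    2:{ apply Na, Tfull. intros U GU. destruct (Gab U GU); auto. exfalso; apply NB; exists U; split; auto. }
    set (A := Defs.bigcap Ga). set (B := Defs.bigcap Gb).
    assert (ThA : Th L A).
    { apply Th_inter. exists Ua; auto. intros U [[[H _] _] _]; auto. }
    assert (ThB : Th L B).
    { apply Th_inter. exists Ub; auto. intros U [[[H _] _] _]; auto. }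
    destruct HP as [_ HP].
    assert (E : T = Defs.bigcap (fun T' => In T' (A :: B :: nil))).
    { apply functional_extensionality; intro z; apply propositional_extensionality; split.
      - intros Tz V HV. destruct HV as [HV|[HV|[]]]; rewrite <- HV; intros U [[_ TU] _]; apply TU; auto.
      - intros Hz. apply Tfull. intros U GU. destruct (Gab U GU) as [Ha|Hb].
        + apply (Hz A); [left; auto|]. split; auto.
        + apply (Hz B); [right; left; auto|]. split; auto. }
    assert (HI : In T (A :: B :: nil)).
    { apply HP; [discriminate| |exact E]. intros V [HV|[HV|[]]]; rewrite <- HV; auto. }
    destruct HI as [HI|[HI|[]]].
    * apply Na. rewrite <- HI. intros U [_ Ha]; exact Ha.
    * apply Nb. rewrite <- HI. intros U [_ Hb]; exact Hb.
  + apply mp; auto.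
- intros P HP. split.
  + intros Hi Q HQ PQ Qa. apply (@mp L a b Q (proj1 HQ) Qa (PQ _ Hi)).
  + intros H. apply NNPP; intro N. destruct (@sep L _ _ (proj1 HP) N) as [M [HM [TM NM]]].
    apply NM. apply (limp_spec L a b HM). intros T' HT' MT' T'a.
    apply (H T'); auto using tp_p. intros z hz; apply MT', TM, hz.
Qed.
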